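(* Consider one seller with one item and $n$ ex-post rational buyers $N=\{1,\dots,n\}$; the item's quality $q\in Q=[q_1,q_2]$ has density $g$ and is observed only by the seller; buyer $i$'s valuation $v_i(q)$ is monotone increasing in $q$ with inverse $v_i^{-1}$. A fixed-price signaling mechanism is a pair $(\pi,p)$ where, for each $q$, $\pi(q,\cdot)$ is a probability distribution over the signals $s_0,s_1,\dots,s_n$ ($\pi(q,s_i)\ge0$, $\sum_{i\in N}\pi(q,s_i)+\pi(q,s_0)=1$); signal $s_i$ means buyer $i$ receives ''1'' (buy) and all others receive ''0'', and $s_0$ means all buyers receive ''0''. Then $(\pi,p)$ is obedient for all buyers (each ex-post rational buyer, after Bayesian updating on his own received signal, is almost surely willing to buy after receiving 1 and almost surely unwilling after receiving 0) if and only if for all $i\in N$: $\int_{q_1}^{v_i^{-1}(p)}\pi(q,s_i)g(q)\,\mathrm{d}q=0$ and $\int_{v_i^{-1}(p)}^{q_2}[1-\pi(q,s_i)]g(q)\,\mathrm{d}q=0$.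
   Context: An ex-post rational buyer $i$ is willing to buy iff $v_i(q)\ge p$. Upon receiving 1, buyer $i$'s posterior density is $\pi(q,s_i)g(q)/\int_Q\pi(q',s_i)g(q')\,\mathrm{d}q'$; upon receiving 0 it is $[1-\pi(q,s_i)]g(q)/\int_Q[1-\pi(q',s_i)]g(q')\,\mathrm{d}q'$. *)

(* Defs.v *)
From HB Require Import structures.
From mathcomp Require Import all_boot all_order all_algebra.
From mathcomp Require Import all_classical all_reals all_analysis.
Set Implicit Arguments. Unset Strict Implicit. Unset Printing Implicit Defensive.
Import Order.TTheory GRing.Theory Num.Theory.
Local Open Scope classical_set_scope.
Local Open Scope ring_scope.

(* Signals: [None] = s_0 (everyone receives 0), [Some i] = s_i (buyer i
   receives 1, all others receive 0).  [pi q s] = pi(q, s). *)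

Definition signaling_scheme (R : realType) (n : nat) (q1 q2 : R)
    (pi : R -> option 'I_n -> R) : Prop :=
  forall q, q1 <= q <= q2 ->
    (forall s, 0 <= pi q s) /\ \sum_(i < n) pi q (Some i) + pi q None = 1.

Definition density_on (R : realType) (q1 q2 : R) (g : R -> R) : Prop :=
  measurable_fun `[q1, q2] g /\
  (forall q, q1 <= q <= q2 -> 0 <= g q) /\
  (\int[@lebesgue_measure R]_(q in `[q1, q2]) (g q)%:E = 1)%E.

Definition posterior1 (R : realType) (n : nat) (q1 q2 : R) (g : R -> R)
    (pi : R -> option 'I_n -> R) (i : 'I_n) (q : R) : R :=
  pi q (Some i) * g q /
  fine (\int[@lebesgue_measure R]_(x in `[q1, q2]) (pi x (Some i) * g x)%:E)%E.

Definition posterior0 (R : realType) (n : nat) (q1 q2 : R) (g : R -> R)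
    (pi : R -> option 'I_n -> R) (i : 'I_n) (q : R) : R :=
  (1 - pi q (Some i)) * g q /
  fine (\int[@lebesgue_measure R]_(x in `[q1, q2]) ((1 - pi x (Some i)) * g x)%:E)%E.

(* (pi, p) is obedient for all ex-post rational buyers (buyer i willing to buy
   iff v_i(q) >= p): after receiving 1, the posterior probability that
   v_i(q) < p (unwilling) is 0; after receiving 0, the posterior probability
   that v_i(q) >= p (willing) is 0. *)
Definition obedient (R : realType) (n : nat) (q1 q2 : R) (g : R -> R)
    (v : 'I_n -> R -> R) (pi : R -> option 'I_n -> R) (p : R) : Prop :=
  forall i : 'I_n,
    (\int[@lebesgue_measure R]_(q in `[q1, q2] `&` [set q | (v i q < p)%R])
        (posterior1 q1 q2 g pi i q)%:E = 0)%E /\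
    (\int[@lebesgue_measure R]_(q in `[q1, q2] `&` [set q | (p <= v i q)%R])
        (posterior0 q1 q2 g pi i q)%:E = 0)%E.

(* Main.v *)
Require Import Defs.
From HB Require Import structures.
From mathcomp Require Import all_boot all_order all_algebra.
From mathcomp Require Import all_classical all_reals all_analysis.
From mathcomp Require Import measurable_realfun.
Import Order.TTheory GRing.Theory Num.Theory.
Local Open Scope classical_set_scope.
Local Open Scope ring_scope.

Lemma key (R : realType) (D L : set R) (f : R -> R) :
  measurable D -> measurable L -> L `<=` D -> measurable_fun D f ->
  (forall x, D x -> 0 <= f x) ->
  (\int[@lebesgue_measure R]_(x in D) (f x)%:E < +oo)%E ->
  (\int[@lebesgue_measure R]_(x in L)
     (f x / fine (\int[@lebesgue_measure R]_(x in D) (f x)%:E)%E)%:E = 0)%E <->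
  (\int[@lebesgue_measure R]_(x in L) (f x)%:E = 0)%E.
Proof.
move=> mD mL LD mf f0 fin.
set I := (\int[@lebesgue_measure R]_(x in D) (f x)%:E)%E.
have I0 : (0 <= I)%E by apply: integral_ge0 => x Dx; rewrite lee_fin f0.
have mfL : measurable_fun L (EFin \o f).
  by apply/measurable_EFinP; exact: (measurable_funS mD LD mf).
have IL0 : (0 <= \int[@lebesgue_measure R]_(x in L) (f x)%:E)%E.
  by apply: integral_ge0 => x Lx; rewrite lee_fin f0 //; exact: LD.
have ILI : (\int[@lebesgue_measure R]_(x in L) (f x)%:E <= I)%E.
  have := ge0_subset_integral (@lebesgue_measure R) mL mD (f := fun x => (f x)%:E). move=> H; apply: H.
  - exact/measurable_EFinP.
  - by move=> x Dx; rewrite lee_fin f0.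
  - exact: LD.
have c0 : 0 <= fine I by apply: fine_ge0.
under eq_integral => x _ do rewrite mulrC EFinM.
rewrite ge0_integralZl_EFin //; last first.
- by rewrite invr_ge0.
- by move=> x Lx; rewrite lee_fin f0 //; exact: LD.
have [cz|cnz] := eqVneq (fine I) 0.
  have IZ : I = 0%E by rewrite -[I]fineK ?cz // ge0_fin_numE.
  have -> : (\int[@lebesgue_measure R]_(x in L) (f x)%:E = 0)%E.
    by apply/eqP; rewrite eq_le IL0 andbT -IZ.
  by rewrite mule0.
split; last by move=> ->; rewrite mule0.
move/eqP; rewrite mule_eq0 eqe invr_eq0 (negbTE cnz) /=; by move/eqP.
Qed.

Theorem mainTheorem7 (R : realType) (n : nat) (q1 q2 : R) (g : R -> R)
    (v vinv : 'I_n -> R -> R) (pi : R -> option 'I_n -> R) (p : R) :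
  q1 < q2 ->
  density_on q1 q2 g ->
  (forall s, measurable_fun `[q1, q2] (fun q => pi q s)) ->
  signaling_scheme q1 q2 pi ->
  (forall i, {homo v i : x y / x < y}) ->
  (forall i, v i (vinv i p) = p) ->
  obedient q1 q2 g v pi p <->
  (forall i : 'I_n,
    (\int[@lebesgue_measure R]_(q in `[q1, vinv i p] `&` `[q1, q2])
        (pi q (Some i) * g q)%:E = 0)%E /\
    (\int[@lebesgue_measure R]_(q in `[vinv i p, q2] `&` `[q1, q2])
        ((1 - pi q (Some i)) * g q)%:E = 0)%E).
Proof.
move=> hq [mg [g0 g1]] mpi ss vmono vinvp.
set D : set R := `[q1, q2]%classic.
have mD : measurable D by exact: measurable_itv.
suff step : forall i : 'I_n,
  ((\int[@lebesgue_measure R]_(q in D `&` [set q | (v i q < p)%R])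
        (posterior1 q1 q2 g pi i q)%:E = 0)%E <->
   (\int[@lebesgue_measure R]_(q in `[q1, vinv i p] `&` D)
        (pi q (Some i) * g q)%:E = 0)%E) /\
  ((\int[@lebesgue_measure R]_(q in D `&` [set q | (p <= v i q)%R])
        (posterior0 q1 q2 g pi i q)%:E = 0)%E <->
   (\int[@lebesgue_measure R]_(q in `[vinv i p, q2] `&` D)
        ((1 - pi q (Some i)) * g q)%:E = 0)%E).
  split => H i; have [[A1 B1] [A2 B2]] := step i; have [X Y] := H i.
  - by split; [apply: A1|apply: A2].
  - by split; [apply: B1|apply: B2].
move=> i.
set a := vinv i p.
have e : v i a = p by exact: vinvp.
have pib q : D q -> 0 <= pi q (Some i) <= 1.
  rewrite /D /= => Dq; have [nn s1] := ss q Dq.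
  rewrite nn /= -s1.
  apply: (le_trans (y := \sum_(j < n) pi q (Some j))); last by rewrite lerDl nn.
  rewrite (bigD1 i) //= lerDl; apply: sumr_ge0 => j _; exact: nn.
have vlt q : (v i q < p) = (q < a).
  case: (ltgtP q a) => [qa|aq|->]; first by rewrite -e vmono.
  - by apply/negbTE; rewrite -leNgt -e ltW // vmono.
  - by rewrite e ltxx.
have vle q : (p <= v i q) = (a <= q) by rewrite leNgt vlt -leNgt.
have SL : D `&` [set q | (v i q < p)%R] = D `&` `]-oo, a[.
  congr (_ `&` _); apply/funext => x; apply/propext; rewrite /= in_itv /= vlt.
  by [].
have SU : D `&` [set q | (p <= v i q)%R] = D `&` `[a, +oo[.
  congr (_ `&` _); apply/funext => x; apply/propext; rewrite /= in_itv /= vle.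
  by rewrite andbT.
have TL : (`[q1, a] `&` D) `\ a = D `&` `]-oo, a[.
  apply/seteqP; split => x /=; rewrite /D /= !in_itv /= ?andbT.
  - move=> [[/andP[h1 h2] h3] h4]; split => //; rewrite lt_neqAle h2 andbT.
    exact/eqP.
  - move=> [H1 h3]; move/andP: (H1) => [h1 h2].
    split; last by move=> E; move: h3; rewrite E ltxx.
    by split => //; rewrite h1 (ltW h3).
have TU : `[a, q2] `&` D = D `&` `[a, +oo[.
  apply/seteqP; split => x /=; rewrite /D /= !in_itv /= ?andbT.
  - by move=> [/andP[h1 h2] /andP[h3 h4]]; rewrite h3 h4 h1.
  - by move=> [/andP[h1 h2] h3]; rewrite h1 h2 h3.
have mL : measurable (D `&` `]-oo, a[) by apply: measurableI.
have mU : measurable (D `&` `[a, +oo[) by apply: measurableI.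
have mf1 : measurable_fun D (fun q => pi q (Some i) * g q).
  exact: measurable_funM.
have mf0 : measurable_fun D (fun q => (1 - pi q (Some i)) * g q).
  by apply: measurable_funM => //; apply: measurable_funB.
have f1ge0 q : D q -> 0 <= pi q (Some i) * g q.
  by move=> Dq; have /andP[h1 h2] := pib q Dq; rewrite mulr_ge0 // g0.
have f0ge0 q : D q -> 0 <= (1 - pi q (Some i)) * g q.
  by move=> Dq; have /andP[h1 h2] := pib q Dq; rewrite mulr_ge0 // ?g0 // subr_ge0.
have mgE : measurable_fun D (EFin \o g) by exact/measurable_EFinP.
have fin1 : (\int[@lebesgue_measure R]_(x in D) (pi x (Some i) * g x)%:E < +oo)%E.
  apply: (le_lt_trans (y := 1%E)); last by rewrite ltey.
  rewrite -g1; apply: ge0_le_integral => //.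
  - exact/measurable_EFinP.
  - move=> x Dx; rewrite lee_fin; have /andP[h1 h2] := pib x Dx.
    by rewrite ler_piMl // g0.
have fin0 : (\int[@lebesgue_measure R]_(x in D) ((1 - pi x (Some i)) * g x)%:E < +oo)%E.
  apply: (le_lt_trans (y := 1%E)); last by rewrite ltey.
  rewrite -g1; apply: ge0_le_integral => //.
  - exact/measurable_EFinP.
  - move=> x Dx; rewrite lee_fin; have /andP[h1 h2] := pib x Dx.
    by rewrite ler_piMl ?g0 // ?subr_ge0 // gerBl.
split.
- rewrite SL /posterior1.
  rewrite (@key _ _ _ _ mD mL (@subIsetl _ _ _) mf1 f1ge0 fin1).
  rewrite -(integral_setD1 (r := a) (D := `[q1, a] `&` D)); rewrite ?TL //.
  apply/measurable_EFinP; apply: measurable_funS mf1 => //; exact: subIsetl.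
- rewrite SU TU /posterior0.
  exact: (@key _ _ _ _ mD mU (@subIsetl _ _ _) mf0 f0ge0 fin0).
Qed.
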